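(* For each fixed $k\geq 3$, $$AW(k;r)\leq \frac{2^{k-2}}{(k-1)!}\,r^{k-1}\,(1+o(1))\quad\text{as } r\to\infty.$$
   Context: A sequence of positive integers $w_1<\dots<w_n$ is an ascending wave if $w_{i+1}-w_i \geq w_i-w_{i-1}$ for $2\le i\le n-1$. For positive integers $k,r$, $AW(k;r)$ denotes the least positive integer $N$ such that every $r$-coloring of $\{1,\dots,N\}$ contains a $k$-term monochromatic ascending wave. *)

(* Defs.v *)
From HB Require Import structures.
From mathcomp Require Import all_boot all_order all_algebra.
From mathcomp Require Import reals.
Set Implicit Arguments. Unset Strict Implicit. Unset Printing Implicit Defensive.

Definition ascending_wave (k : nat) (w : nat -> nat) : Prop :=
  [/\ 0 < w 0,
      (forall i, i.+1 < k -> w i < w i.+1) &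
      (forall i, i.+2 < k -> w i.+1 - w i <= w i.+2 - w i.+1)].

(* Every r-coloring c of {1,...,N} contains a k-term monochromatic ascending
   wave (all terms in {1,...,N}). The coloring is given on all of nat but only
   its values on {1,...,N} matter. *)
Definition AW_property (k r N : nat) : Prop :=
  forall c : nat -> 'I_r,
    exists w : nat -> nat,
      [/\ ascending_wave k w,
          (forall i, i < k -> w i <= N) &
          (forall i, i < k -> c (w i) = c (w 0))].

(* AW(k;r) <= x  (AW(k;r) is the least positive N with AW_property k r N) *)
Definition AW_le {R : realType} (k r : nat) (x : R) : Prop :=
  exists N : nat, [/\ 0 < N, AW_property k r N & (N%:R <= x)%R].

(* Main.v *)
Require Import Defs.
From HB Require Import structures.
From mathcomp Require Import all_boot all_order all_algebra.
From mathcomp Require Import reals zify ring.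
Import Order.TTheory GRing.Theory Num.Theory.

Lemma count_partition (P : pred nat) (f : nat -> nat) m (l : seq nat) :
  (forall x, x \in l -> f x < m) ->
  count P l = \sum_(t < m) count (fun x => P x && (f x == t)) l.
Proof.
elim: l => [|x l IH] Hl /=.
  by rewrite big1.
rewrite big_split /= -IH; last by move=> y Hy; apply: Hl; rewrite inE Hy orbT.
congr (_ + _).
have Hx : f x < m by apply: Hl; rewrite inE eqxx.
case: (P x) => /=; last by rewrite big1.
rewrite (bigD1 (Ordinal Hx)) //= eqxx big1 // => t Ht.
case: eqP => // E; move: Ht; suff -> : Ordinal Hx = t by rewrite eqxx.
by apply: val_inj; rewrite /= E.
Qed.

Lemma pigeon m F (c : 'I_m -> nat) : m * F < \sum_(t < m) c t ->
  exists t, F <= c t.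
Proof.
move=> H; case: (boolP [exists t, F <= c t]) => [/existsP//|/existsPn Hn].
have : \sum_(t < m) c t <= \sum_(t < m) F.-1.
  by apply: leq_sum => t _; move: (Hn t); rewrite -ltnNge; lia.
rewrite sum_nat_const card_ord => H2; lia.
Qed.

Fixpoint G (j e : nat) : nat := if j is j'.+1 then e * G j' e + 2 else 1.

Lemma wave_exists j e : forall (P : pred nat) n, n <= 2^e -> G j e <= count P (iota 1 n) ->
  exists w, [/\ ascending_wave j.+1 w, (forall i, i < j.+1 -> w i <= n) &
                (forall i, i < j.+1 -> P (w i))].
Proof.
elim: j => [|j IHj] P n Hn Hc.
  have : has P (iota 1 n) by rewrite has_count.
  case/hasP => x; rewrite mem_iota => /andP [H1 H2] Px.
  exists (fun _ => x); split => //.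
elim: n Hn Hc => [|n IHn] Hn Hc; first by move: Hc => /=; lia.
move: Hc; have -> : iota 1 n.+1 = iota 1 (n + 1) by rewrite addn1.
rewrite iotaD count_cat /= addn0.
case Pb: (P (1 + n)) => /= Hc.
  pose b := 1 + n.
  pose f x := trunc_log 2 (b - x).
  have Hf : forall x, x \in iota 1 n -> f x < e.
    move=> x; rewrite mem_iota => /andP [H1 H2].
    rewrite /f ltnNge; apply/negP => He.
    have : 2 ^ e <= 2 ^ trunc_log 2 (b - x) by apply: leq_pexp2l.
    have := @trunc_logP 2 (b - x) isT; rewrite /b.
    move=> T1 T2; have {T1} := T1 ltac:(lia). lia.
  move: Hc; rewrite (@count_partition P f e _ Hf) => Hc.
  have Hc' : e * G j e < \sum_(t < e) count (fun x => P x && (f x == t)) (iota 1 n).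
    by rewrite /= addn2 addn1 ltnS in Hc.
  have [t Ht] := @pigeon e (G j e) (fun t : 'I_e => count (fun x => P x && (f x == t)) (iota 1 n)) Hc'.
  have [w [[W0 W1 W2] Wb WP]] := IHj _ n ltac:(lia) Ht.
  have Wr : forall i, i < j.+1 -> 2 ^ t <= b - w i < 2 ^ t.+1.
    move=> i Hi; move: (WP i Hi) => /andP [_ /eqP Ef].
    have Hb : 0 < b - w i by have := Wb i Hi; rewrite /b; lia.
    rewrite -Ef; apply/andP; split; first exact: trunc_logP.
    exact: trunc_log_ltn.
  exists (fun i => if i < j.+1 then w i else b); split.
  - split.
    + by rewrite ltn0Sn.
    + move=> i Hi; case: (boolP (i.+1 < j.+1)) => Hi1.
        have -> : i < j.+1 by lia.
        exact: W1.
      have -> : i < j.+1 by lia.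
      have := Wb i ltac:(lia); rewrite /b; lia.
    + move=> i Hi; case: (boolP (i.+2 < j.+1)) => Hi2.
        have -> : i < j.+1 by lia.
        have -> : i.+1 < j.+1 by lia.
        exact: W2.
      have -> : i < j.+1 by lia.
      have -> : i.+1 < j.+1 by lia.
      have Ej : i.+1 = j by lia.
      have := W1 i ltac:(lia).
      have := Wr i ltac:(lia); have := Wr i.+1 ltac:(lia).
      rewrite expnS Ej; lia.
  - move=> i Hi; case: ifP => H; last by rewrite /b; lia.
    have := Wb i H; lia.
  - move=> i Hi; case: ifP => H; last by rewrite Pb.
    by have := WP i H => /andP [].
have [w [Wa Wb WP]] := IHn ltac:(lia) ltac:(by rewrite addn0 in Hc).
exists w; split => // i Hi; have := Wb i Hi; lia.
Qed.
Lemma G_bound j e : (G j e <= (e + 2) ^ j)%N.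
Proof.
elim: j => [|j IH] //=; rewrite expnS.
have := expn_gt0 (e + 2) j; rewrite addn_gt0 orbT /=.
move: IH; set X := (e + 2) ^ j; set g := G j e; nia.
Qed.

Lemma G_pos j e : (0 < G j e)%N.
Proof. by case: j => //= j; rewrite addn2. Qed.

Lemma AW_from k r e : (0 < k)%N -> (r * G k.-1 e < 2 ^ e)%N -> AW_property k r (2 ^ e).
Proof.
move=> Hk H c.
have Hf : forall x, x \in iota 1 (2 ^ e) -> (nat_of_ord (c x) < r)%N by move=> x _.
have := @count_partition predT (fun x => nat_of_ord (c x)) r _ Hf.
rewrite count_predT size_iota => Hs.
have Hc' : (r * G k.-1 e < \sum_(t < r) count (fun x => predT x && (nat_of_ord (c x) == t)) (iota 1 (2 ^ e)))%N.
  by rewrite -Hs.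
have [t Ht] := @pigeon r (G k.-1 e) (fun t : 'I_r => count (fun x => predT x && (nat_of_ord (c x) == t)) (iota 1 (2 ^ e))) Hc'.
have [w [Wa Wb WP]] := @wave_exists k.-1 e _ (2 ^ e) (leqnn _) Ht.
rewrite prednK // in Wa Wb WP.
have Wc : forall i, (i < k)%N -> c (w i) = t by move=> i Hi; apply: val_inj; apply/eqP; exact: WP.
by exists w; split => // i Hi; rewrite !Wc.
Qed.

Lemma sq_le_pow y : (4 <= y)%N -> (y ^ 2 <= 2 ^ y)%N.
Proof.
elim: y => [//|y IH] Hy.
case: (ltnP y 4) => Hy4.
  by have -> : y = 3 by lia.
have := IH Hy4; rewrite (expnS 2 y) -!mulnn; set P := 2 ^ y; nia.
Qed.

Lemma lin_le_pow D K : exists M, forall y, (M <= y)%N -> (D * (y + 2) + K + 3 <= 2 ^ y)%N.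
Proof.
exists (D + K + 9) => y Hy.
have := @sq_le_pow y ltac:(lia); rewrite -mulnn; nia.
Qed.

Lemma nat_bound k (Hk : (3 <= k)%N) : exists r0, forall r, (r0 <= r)%N ->
  exists e, [/\ (r * G k.-1 e < 2 ^ e)%N & ((k.-1)`! * 2 ^ e <= r ^ k.-1)%N].
Proof.
set D := k.-1; set K := D`!.
have HD : (2 <= D)%N by rewrite /D; lia.
have [M HM] := lin_le_pow D K.
exists (2 ^ (2 ^ M)) => r Hr.
have r0 : (0 < r)%N by apply: leq_trans Hr; rewrite expn_gt0.
set z := trunc_log 2 r.
have Z1 : (2 ^ z <= r)%N by exact: trunc_logP.
have Z2 : (r < 2 ^ z.+1)%N by exact: trunc_log_ltn.
have Zm : (2 ^ M <= z)%N by exact: trunc_log_max.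
have z0 : (0 < z)%N by apply: leq_trans Zm; rewrite expn_gt0.
set y := trunc_log 2 z.
have Y1 : (2 ^ y <= z)%N by exact: trunc_logP.
have Y2 : (z < 2 ^ y.+1)%N by exact: trunc_log_ltn.
have Ym : (M <= y)%N by exact: trunc_log_max.
have Hy := HM y Ym.
set u := y.+2.
exists (z.+1 + D * u); split.
- have Hu : (z.+1 + D * u + 2 <= 2 ^ u)%N.
    move: Y2; rewrite /u !expnS /u; lia.
  have HG : (G D (z.+1 + D * u) <= 2 ^ (D * u))%N.
    apply: leq_trans (G_bound _ _) _.
    apply: (@leq_trans ((2 ^ u) ^ D)); first by rewrite leq_exp2r; lia.
    by rewrite -expnM mulnC.
  rewrite expnD.
  apply: (@leq_trans (2 ^ z.+1 * G D (z.+1 + D * u))).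
    by rewrite ltn_pmul2r ?G_pos.
  by rewrite leq_mul2l HG orbT.
- have HK : (K < 2 ^ K)%N by exact: ltn_expl.
  apply: (@leq_trans (2 ^ (K + (z.+1 + D * u)))).
    by rewrite (expnD 2 K) leq_mul2r (ltnW HK) orbT.
  apply: (@leq_trans (2 ^ (z * D))).
    rewrite leq_exp2l //; move: Hy Y1; rewrite /u; nia.
  by rewrite expnM leq_exp2r // (leq_trans _ HD).
Qed.

Local Open Scope ring_scope.

Theorem corollary1p5 (R : realType) (k : nat) : (3 <= k)%N ->
  forall eps : R, 0 < eps ->
  exists r0 : nat, forall r : nat, (r0 <= r)%N ->
    AW_le k r ((1 + eps) * (2 ^+ (k - 2) / (k.-1)`!%:R) * r%:R ^+ k.-1).
Proof.
move=> Hk eps He.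
have [r0 Hr0] := @nat_bound k Hk.
exists r0 => r Hr.
have [e [H1 H2]] := Hr0 r Hr.
exists (2 ^ e)%N; split.
- by rewrite expn_gt0.
- apply: AW_from => //; lia.
- have HK : (0 : R) < (k.-1)`!%:R by rewrite ltr0n fact_gt0.
  have -> : (1 + eps) * (2 ^+ (k - 2) / (k.-1)`!%:R) * r%:R ^+ k.-1
          = ((1 + eps) * 2 ^+ (k - 2)) * (r%:R ^+ k.-1 / (k.-1)`!%:R) by ring.
  apply: (le_trans _ (ler_peMl _ _)).
  + rewrite ler_pdivlMr // mulrC -natrX -natrM ler_nat; exact: H2.
  + by rewrite divr_ge0 // ?exprn_ge0 // ltW.
  + apply: mulr_ege1; last by apply: exprn_ege1; rewrite ler1n.
    by rewrite lerDl ltW.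
Qed.
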